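(* Let $t\in\mathtt T_J$, $\mathtt D$ a list context, $\Gamma$ an environment, $\sigma$ a type and $n\in\mathbb N$. Then $\Gamma\vdash^n \mathtt D\langle\lambda x.t\rangle:\sigma$ is derivable in $\cap J$ if and only if $\Gamma\vdash^n \lambda x.\mathtt D\langle t\rangle:\sigma$ is derivable in $\cap J$ (where variables bound by $\mathtt D$ are distinct from $x$ and not free in... are chosen by $\alpha$-conversion so that $x$ does not occur in $\mathtt D$).
   Context: Terms $\mathtt T_J$: $t,u,r ::= x \mid \lambda x.t \mid t(u,y.r)$ ($y$ bound in $r$), up to $\alpha$-equivalence. List contexts $\mathtt D ::= \Diamond \mid t(u,y.\mathtt D)$. System $\cap J$: types $\sigma,\tau ::= \alpha \mid \mathcal M\to\sigma$, where $\mathcal M=[\sigma_i]_{i\in I}$ is a finite (possibly empty) multiset of types; $\sqcup$ is multiset union. Environments $\Gamma$ map variables to multisets, with finitely many non-empty; $\Gamma\wedge\Delta$ is pointwise multiset union; $\Gamma;x:\mathcal M$ extends $\Gamma$ (with $x\notin\mathrm{dom}\,\Gamma$). Choice operator: $\mathrm{ch}(\mathcal M)=\mathcal M$ if $\mathcal M\ne[\,]$, and $\mathrm{ch}([\,])=[\tau]$ for an arbitrary type $\tau$ chosen in each rule instance. Rules: (var) $x:[\sigma]\vdash x:\sigma$; (abs) from $\Gamma;x:\mathcal M\vdash t:\sigma$ infer $\Gamma\vdash\lambda x.t:\mathcal M\to\sigma$; (many) from $(\Gamma_i\vdash t:\sigma_i)_{i\in I}$ with $I\neq\emptyset$ infer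 $\wedge_{i\in I}\Gamma_i\vdash t:[\sigma_i]_{i\in I}$; (app) from $\Gamma\vdash t:\mathrm{ch}([\mathcal M_i\to\tau_i]_{i\in I})$, $\Delta\vdash u:\mathrm{ch}(\sqcup_{i\in I}\mathcal M_i)$ and $\Lambda;y:[\tau_i]_{i\in I}\vdash r:\sigma$ infer $\Gamma\wedge\Delta\wedge\Lambda\vdash t(u,y.r):\sigma$. $\Gamma\vdash^n t:\sigma$ means a derivation whose size is $n$, the size being the number of rule instances other than (many). *)

(* Defs.v *)
(* System cap-J (non-idempotent intersection types for the
   lambda-calculus with generalized applications). *)
From Stdlib Require Import List Permutation Arith.
Import ListNotations.

Definition var := nat.

Inductive term : Type :=
| Var : var -> term
| Lam : var -> term -> term
| JApp : term -> term -> var -> term -> term.  (* JApp t u y r = t(u, y.r) *)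

Inductive lctx : Type :=
| Hole : lctx
| LApp : term -> term -> var -> lctx -> lctx.

Fixpoint plug (D : lctx) (s : term) : term :=
  match D with
  | Hole => s
  | LApp t u y D' => JApp t u y (plug D' s)
  end.

Fixpoint occurs (x : var) (t : term) : Prop :=
  match t with
  | Var z => x = z
  | Lam z t' => x = z \/ occurs x t'
  | JApp t1 t2 y r => occurs x t1 \/ occurs x t2 \/ x = y \/ occurs x r
  end.

Fixpoint occurs_ctx (x : var) (D : lctx) : Prop :=
  match D with
  | Hole => False
  | LApp t u y D' => occurs x t \/ occurs x u \/ x = y \/ occurs_ctx x D'
  end.

(** Types: sigma ::= alpha | M -> sigma, multisets represented by lists. *)
Inductive ty : Type :=
| TVar : nat -> ty
| TArr : list ty -> ty -> ty.

(** Equality of types, treating the lists inside arrows as multisets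
    (recursively). *)
Inductive teq : ty -> ty -> Prop :=
| teq_var a : teq (TVar a) (TVar a)
| teq_arr M L M' s s' :
    Permutation M L -> Forall2 teq L M' -> teq s s' ->
    teq (TArr M s) (TArr M' s').

Definition meq (M M' : list ty) : Prop :=
  exists L, Permutation M L /\ Forall2 teq L M'.

Definition env := var -> list ty.

Definition env_eq (G D : env) : Prop := forall z, meq (G z) (D z).

Definition env_and (G D : env) : env := fun z => G z ++ D z.

Definition env_single (x : var) (s : ty) : env :=
  fun z => if Nat.eqb z x then [s] else [].

Definition env_rem (G : env) (x : var) : env :=
  fun z => if Nat.eqb z x then [] else G z.

Definition ch (tau : ty) (M : list ty) : list ty :=
  match M with [] => [tau] | _ => M end.

(** [der G t s n] : G |-^n t : s ; [derm G t M n] : the (many) rule,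
    (which does not count in the size). *)
Inductive der : env -> term -> ty -> nat -> Prop :=
| der_var G x s :
    env_eq G (env_single x s) ->
    der G (Var x) s 1
| der_abs G G' x t s n :
    der G' t s n ->
    env_eq G (env_rem G' x) ->
    der G (Lam x t) (TArr (G' x) s) (S n)
| der_app G Gt Du Lr t u y r s (ps : list (list ty * ty)) tau1 tau2
          At Bu n1 n2 n3 :
    derm Gt t At n1 ->
    meq At (ch tau1 (map (fun p => TArr (fst p) (snd p)) ps)) ->
    derm Du u Bu n2 ->
    meq Bu (ch tau2 (concat (map fst ps))) ->
    der Lr r s n3 ->
    meq (Lr y) (map snd ps) ->
    env_eq G (env_and Gt (env_and Du (env_rem Lr y))) ->
    der G (JApp t u y r) s (S (n1 + n2 + n3))
with derm : env -> term -> list ty -> nat -> Prop :=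
| derm_one G t s n :
    der G t s n -> derm G t [s] n
| derm_cons G D t s M n m :
    der G t s n -> derm D t M m -> derm (env_and G D) t (s :: M) (n + m).

(* Main.v *)
Require Import Defs.
From Stdlib Require Import List Permutation Arith Lia.
Import ListNotations.

Lemma F2_flip {A B} (R : A -> B -> Prop) l1 l2 :
  Forall2 R l1 l2 -> Forall2 (fun b a => R a b) l2 l1.
Proof. induction 1; constructor; auto. Qed.

Lemma F2_impl {A B} (R S : A -> B -> Prop) l1 l2 :
  (forall a b, R a b -> S a b) -> Forall2 R l1 l2 -> Forall2 S l1 l2.
Proof. intros H; induction 1; constructor; auto. Qed.

Lemma F2_comp {A B C} (Q : B -> C -> Prop) (T : A -> C -> Prop) l1 l2 l3 :
  Forall2 (fun a b => forall c, Q b c -> T a c) l1 l2 -> Forall2 Q l2 l3 -> Forall2 T l1 l3.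
Proof.
  intros H; revert l3; induction H; intros l3 H3; inversion H3; subst; constructor; auto.
Qed.

Lemma F2_perm_r {A B} (R : A -> B -> Prop) l1 l2 l2' :
  Forall2 R l1 l2 -> Permutation l2 l2' -> exists l1', Permutation l1 l1' /\ Forall2 R l1' l2'.
Proof.
  intros H P. apply F2_flip in H.
  destruct (Permutation_Forall2 P H) as [l1' [P1 H1]].
  exists l1'. split; auto. apply F2_flip in H1. exact H1.
Qed.

Fixpoint teq_refl (a : ty) : teq a a :=
  match a with
  | TVar n => teq_var n
  | TArr M s => teq_arr M M M s s (Permutation_refl M)
      ((fix g (l : list ty) : Forall2 teq l l :=
          match l with
          | [] => Forall2_nil _
          | y :: l' => Forall2_cons _ _ (teq_refl y) (g l')
          end) M) (teq_refl s)
  end.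

Section TeqInd.
Variable P : ty -> ty -> Prop.
Hypothesis Hv : forall a, P (TVar a) (TVar a).
Hypothesis Ha : forall M L M' s s', Permutation M L -> Forall2 teq L M' -> Forall2 P L M' ->
  teq s s' -> P s s' -> P (TArr M s) (TArr M' s').
Fixpoint teq_ind' (a b : ty) (H : teq a b) {struct H} : P a b :=
  match H with
  | teq_var n => Hv n
  | teq_arr M L M' s s' HP HF Hs => Ha M L M' s s' HP HF
      ((fix g (l1 l2 : list ty) (F : Forall2 teq l1 l2) {struct F} : Forall2 P l1 l2 :=
          match F with
          | Forall2_nil _ => Forall2_nil _
          | Forall2_cons _ _ h F' => Forall2_cons _ _ (teq_ind' _ _ h) (g _ _ F')
          end) L M' HF) Hs (teq_ind' _ _ Hs)
  end.
End TeqInd.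

Lemma teq_sym a b : teq a b -> teq b a.
Proof.
  revert a b; apply teq_ind'.
  - intros; constructor.
  - intros M L M' s s' HP _ HF _ Hs.
    apply F2_flip in HF.
    destruct (F2_perm_r _ _ _ _ HF (Permutation_sym HP)) as [L2 [P2 F2]].
    econstructor; eauto.
Qed.

Lemma teq_trans a b c : teq a b -> teq b c -> teq a c.
Proof.
  intros H; revert a b H c; apply (teq_ind' (fun a b => forall c, teq b c -> teq a c)).
  - auto.
  - intros M L M' s s' HP _ HF _ Hs c Hc. inversion Hc; subst.
    destruct (F2_perm_r _ _ _ _ HF H1) as [L2 [P2 F2]].
    eapply teq_arr. eapply Permutation_trans; eauto.
    eapply (F2_comp teq); [exact F2|exact H2]. eauto.
Qed.

Lemma meq_refl M : meq M M.
Proof. exists M; split; auto. induction M; constructor; auto using teq_refl. Qed.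

Lemma meq_sym M N : meq M N -> meq N M.
Proof.
  intros [L [P F]]. apply F2_flip in F.
  destruct (F2_perm_r _ _ _ _ F (Permutation_sym P)) as [L2 [P2 F2]].
  exists L2; split; auto. eapply F2_impl; [|exact F2]. intros; apply teq_sym; auto.
Qed.

Lemma meq_trans M N K : meq M N -> meq N K -> meq M K.
Proof.
  intros [L [P F]] [L' [P' F']].
  destruct (F2_perm_r _ _ _ _ F P') as [L2 [P2 F2]].
  exists L2; split. eapply Permutation_trans; eauto.
  eapply (F2_comp teq); [|exact F']. eapply F2_impl; [|exact F2]. intros; eapply teq_trans; eauto.
Qed.

Lemma meq_app A A' B B' : meq A A' -> meq B B' -> meq (A ++ B) (A' ++ B').
Proof.
  intros [L [P F]] [L' [P' F']]. exists (L ++ L'); split.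
  apply Permutation_app; auto. apply Forall2_app; auto.
Qed.

Lemma meq_nil_r M : meq M [] -> M = [].
Proof. intros [L [P F]]. inversion F; subst. apply Permutation_nil; apply Permutation_sym; auto. Qed.

Lemma meq_nil_l M : meq [] M -> M = [].
Proof. intros H. apply meq_sym in H. apply meq_nil_r; auto. Qed.

Lemma env_eq_refl G : env_eq G G.
Proof. intro; apply meq_refl. Qed.
Lemma env_eq_sym G D : env_eq G D -> env_eq D G.
Proof. intros H z; apply meq_sym; auto. Qed.
Lemma env_eq_trans G D E : env_eq G D -> env_eq D E -> env_eq G E.
Proof. intros H H' z; eapply meq_trans; eauto. Qed.

Lemma der_env G G' t s n : der G t s n -> env_eq G G' -> der G' t s n.
Proof.
  intros H E; destruct H.
  - constructor. eapply env_eq_trans; eauto using env_eq_sym.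
  - econstructor; eauto. eapply env_eq_trans; eauto using env_eq_sym.
  - econstructor; eauto. eapply env_eq_trans; eauto using env_eq_sym.
Qed.

Scheme der_mind := Induction for der Sort Prop
with derm_mind := Induction for derm Sort Prop.

Lemma fv_der_all x : forall G t s n (d : der G t s n), ~ occurs x t -> G x = [].
Proof.
  apply (der_mind (fun G t s n _ => ~ occurs x t -> G x = [])
                  (fun G t M n _ => ~ occurs x t -> G x = [])).
  all: try (intros G z s0 E Hn; simpl in Hn; apply meq_nil_r;
    specialize (E x); unfold env_single in E;
    destruct (Nat.eqb_spec x z); [contradiction|exact E]).
  all: try (intros G G' z t s0 n _ IH E Hn; simpl in Hn; apply meq_nil_r;
    specialize (E x); unfold env_rem in E;
    destruct (Nat.eqb_spec x z); [tauto|]; rewrite IH in E; [exact E|tauto]).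
  all: try (intros G Gt Du Lr t u y r s0 ps tau1 tau2 At Bu n1 n2 n3 _ IH1 _ _ IH2 _ _ IH3 _ E Hn;
    simpl in Hn; apply meq_nil_r; specialize (E x); unfold env_and, env_rem in E;
    destruct (Nat.eqb_spec x y); [tauto|];
    rewrite IH1, IH2, IH3 in E; [exact E|tauto..]).
  all: try (intros G t s0 n _ IH Hn; auto).
  all: intros G D0 t s0 M n m _ IH1 _ IH2 Hn; unfold env_and; rewrite IH1, IH2; auto.
Qed.

Lemma fv_derm_all x : forall G t M n (d : derm G t M n), ~ occurs x t -> G x = [].
Proof.
  apply (derm_mind (fun G t s n _ => ~ occurs x t -> G x = [])
                  (fun G t M n _ => ~ occurs x t -> G x = [])).
  all: try (intros G z s0 E Hn; simpl in Hn; apply meq_nil_r;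
    specialize (E x); unfold env_single in E;
    destruct (Nat.eqb_spec x z); [contradiction|exact E]).
  all: try (intros G G' z t s0 n _ IH E Hn; simpl in Hn; apply meq_nil_r;
    specialize (E x); unfold env_rem in E;
    destruct (Nat.eqb_spec x z); [tauto|]; rewrite IH in E; [exact E|tauto]).
  all: try (intros G Gt Du Lr t u y r s0 ps tau1 tau2 At Bu n1 n2 n3 _ IH1 _ _ IH2 _ _ IH3 _ E Hn;
    simpl in Hn; apply meq_nil_r; specialize (E x); unfold env_and, env_rem in E;
    destruct (Nat.eqb_spec x y); [tauto|];
    rewrite IH1, IH2, IH3 in E; [exact E|tauto..]).
  all: try (intros G t s0 n _ IH Hn; auto).
  all: intros G D0 t s0 M n m _ IH1 _ IH2 Hn; unfold env_and; rewrite IH1, IH2; auto.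
Qed.

Lemma fv_der x G t s n : der G t s n -> ~ occurs x t -> G x = [].
Proof. intro d; exact (fv_der_all x G t s n d). Qed.
Lemma fv_derm x G t M n : derm G t M n -> ~ occurs x t -> G x = [].
Proof. intro d; exact (fv_derm_all x G t M n d). Qed.

Theorem mainTheorem7 (t : term) (D : lctx) (x : var) (G : env) (s : ty) (n : nat) :
  ~ occurs_ctx x D ->
  (der G (plug D (Lam x t)) s n <-> der G (Lam x (plug D t)) s n).
Proof.
  revert G s n. induction D as [|t1 u1 y1 D' IH]; intros G s n Hx; simpl.
  - tauto.
  - simpl in Hx. assert (Hy : x <> y1) by tauto.
    assert (IH' := fun G s n => IH G s n ltac:(tauto)). clear IH.
    split; intros H.
    + inversion H; subst.
      apply IH' in H11. inversion H11; subst.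
      assert (Gx : Gt x = []) by (eapply fv_derm; eauto; tauto).
      assert (Dx : Du x = []) by (eapply fv_derm; eauto; tauto).
      set (G1 := env_and Gt (env_and Du (env_rem G' y1))).
      assert (E1 : G1 x = G' x).
      { unfold G1, env_and, env_rem. rewrite Gx, Dx.
        destruct (Nat.eqb_spec x y1); [contradiction|reflexivity]. }
      rewrite <- E1.
      replace (S (n1 + n2 + S n)) with (S (S (n1 + n2 + n))) by lia.
      econstructor.
      * econstructor; eauto.
        -- eapply meq_trans; [|eassumption].
           specialize (H10 y1). unfold env_rem in H10.
           destruct (Nat.eqb_spec y1 x); [congruence|]. apply meq_sym; auto.
        -- apply env_eq_refl.
      * intros z. eapply meq_trans; [apply H13|].
        unfold G1, env_rem, env_and.
        destruct (Nat.eqb_spec z x).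
        -- subst. rewrite Gx, Dx. simpl.
           destruct (Nat.eqb_spec x y1); [contradiction|].
           specialize (H10 x). unfold env_rem in H10. rewrite Nat.eqb_refl in H10. exact H10.
        -- apply meq_app; [apply meq_refl|]. apply meq_app; [apply meq_refl|].
           destruct (Nat.eqb_spec z y1); [apply meq_refl|].
           specialize (H10 z). unfold env_rem in H10.
           destruct (Nat.eqb_spec z x); [contradiction|exact H10].
    + inversion H; subst. inversion H3; subst.
      assert (Gx : Gt x = []) by (eapply fv_derm; eauto; tauto).
      assert (Dx : Du x = []) by (eapply fv_derm; eauto; tauto).
      set (Lr' := fun z => if Nat.eqb z x then G' x else Lr z).
      assert (ELr : env_eq Lr Lr').
      { intros z. unfold Lr'. destruct (Nat.eqb_spec z x); [|apply meq_refl].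
        subst. apply meq_sym. eapply meq_trans; [apply H15|].
        unfold env_and, env_rem. rewrite Gx, Dx.
        destruct (Nat.eqb_spec x y1); [contradiction|apply meq_refl]. }
      assert (HL : der Lr' (plug D' t) s0 n3) by (eapply der_env; eauto).
      assert (HA : der (env_rem Lr' x) (Lam x (plug D' t)) (TArr (Lr' x) s0) (S n3))
        by (econstructor; eauto; apply env_eq_refl).
      assert (Lx : Lr' x = G' x) by (unfold Lr'; rewrite Nat.eqb_refl; reflexivity).
      rewrite Lx in HA. apply IH' in HA.
      replace (S (S (n1 + n2 + n3))) with (S (n1 + n2 + S n3)) by lia.
      econstructor; eauto.
      * unfold env_rem, Lr'. destruct (Nat.eqb_spec y1 x); [congruence|auto].
      * intros z. eapply meq_trans; [apply H6|].
        unfold env_rem, env_and, Lr'.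
        destruct (Nat.eqb_spec z x).
        -- subst. rewrite Gx, Dx. simpl.
           destruct (Nat.eqb_spec x y1); [contradiction|]. apply meq_refl.
        -- eapply meq_trans; [apply H15|]. unfold env_and, env_rem.
           apply meq_app; [apply meq_refl|]. apply meq_app; [apply meq_refl|].
           destruct (Nat.eqb_spec z y1); apply meq_refl.
Qed.
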